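(* Let $n \ge 2$ and let $Q(x) = x_1x_2 + x_3x_4 + \cdots + x_{2n-1}x_{2n}$ be the hyperbolic quadratic form on $V(2n,2)$, with associated symmetric bilinear form $B(x,y) = Q(x+y)-Q(x)-Q(y)$ and orthogonality $\perp$ with respect to $B$. Let $\Pi$ and $\Sigma$ be two totally singular $n$-dimensional subspaces with $\Pi \cap \Sigma = 0$. For a non-singular point $X$, put $G = X^\perp \cap \Pi$, $H = X^\perp \cap \Sigma$, $P = G^\perp \cap \Sigma$, and define $f(X) = (P,H)$. Then $f$ is a bijection from the set of non-singular points of $V(2n,2)$ (with respect to $Q$) onto the set of point-hyperplane antiflags of $\Sigma \cong V(n,2)$.
   Context: Points are $1$-dimensional subspaces. A point $\langle x\rangle$ is singular if $Q(x)=0$, non-singular otherwise; a subspace is totally singular if all its points are singular. A point-hyperplane antiflag of $\Sigma$ is a pair $(P,H)$ with $P$ a $1$-dimensional subspace of $\Sigma$, $H$ an $(n-1)$-dimensional subspace of $\Sigma$, and $P \not\subseteq H$. *)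

(* Defs.v *)
From HB Require Import structures.
From mathcomp Require Import all_boot all_order all_algebra all_field.
Set Implicit Arguments. Unset Strict Implicit. Unset Printing Implicit Defensive.
Import GRing.Theory.
Local Open Scope ring_scope.

(* The ambient space V(2n,2) is 'rV['F_2]_(n.*2).  Coordinates are 0-indexed:
   the paper's x_{2i-1} x_{2i} (i = 1..n) is our x_(2i) x_(2i+1) (i = 0..n-1). *)
Notation V n := 'rV['F_2]_(n.*2).

Lemma ev_lt n (i : 'I_n) : (i.*2 < n.*2)%N.
Proof. by rewrite ltn_double. Qed.

Lemma od_lt n (i : 'I_n) : (i.*2.+1 < n.*2)%N.
Proof. by rewrite -doubleS leq_double. Qed.

Definition ev n (i : 'I_n) : 'I_(n.*2) := Ordinal (ev_lt i).
Definition od n (i : 'I_n) : 'I_(n.*2) := Ordinal (od_lt i).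

Definition Qf n (x : V n) : 'F_2 := \sum_(i < n) x 0 (ev i) * x 0 (od i).

Definition Bf n (x y : V n) : 'F_2 := Qf (x + y) - Qf x - Qf y.

Definition perp n (U : {vspace V n}) : {vspace V n} :=
  <<[seq y <- enum [set: V n] | [forall x : V n, (x \in U) ==> (Bf x y == 0%R)]]>>%VS.

Definition is_point n (X : {vspace V n}) : Prop := \dim X = 1%N.

Definition nonsingular_point n (X : {vspace V n}) : Prop :=
  is_point X /\ exists x, x \in X /\ Qf x != 0.

Definition totally_singular n (U : {vspace V n}) : Prop :=
  forall x, x \in U -> Qf x = 0.

Definition antiflag n (Sigma : {vspace V n}) (PH : {vspace V n} * {vspace V n}) : Prop :=
  [/\ (PH.1 <= Sigma)%VS, \dim PH.1 = 1%N,
      (PH.2 <= Sigma)%VS, \dim PH.2 = (n - 1)%N & ~~ (PH.1 <= PH.2)%VS].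

Definition fmap n (Pi Sigma X : {vspace V n}) : {vspace V n} * {vspace V n} :=
  let G := (perp X :&: Pi)%VS in
  let H := (perp X :&: Sigma)%VS in
  let P := (perp G :&: Sigma)%VS in
  (P, H).

(* Main.v *)
Require Import Defs.
From HB Require Import structures.
From mathcomp Require Import all_boot all_order all_algebra all_field.
From mathcomp Require Import ring zify.
Set Implicit Arguments. Unset Strict Implicit. Unset Printing Implicit Defensive.
Import GRing.Theory.
Local Open Scope ring_scope.

Section Basics.
Variable n : nat.
Implicit Types x y z : V n.

Definition Bsum x y : 'F_2 :=
  \sum_(i < n) (x 0 (ev i) * y 0 (od i) + x 0 (od i) * y 0 (ev i)).

Lemma BfE x y : Bf x y = Bsum x y.
Proof.
rewrite /Bf /Qf /Bsum -!sumrB; apply: eq_bigr => i _; rewrite !mxE; ring.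
Qed.

Lemma BfC x y : Bf x y = Bf y x.
Proof. rewrite /Bf [y + x]addrC; ring. Qed.

Lemma Bf_linr x (a : 'F_2) y z : Bf x (a *: y + z) = a * Bf x y + Bf x z.
Proof.
rewrite !BfE /Bsum mulr_sumr -big_split /=; apply: eq_bigr => i _; rewrite !mxE; ring.
Qed.

Lemma Bf_linl x (a : 'F_2) y z : Bf (a *: y + z) x = a * Bf y x + Bf z x.
Proof. by rewrite BfC Bf_linr BfC (BfC z). Qed.

Lemma Bf0r x : Bf x 0 = 0.
Proof. by rewrite BfE /Bsum big1 // => i _; rewrite !mxE; ring. Qed.

Lemma Bf0l x : Bf 0 x = 0.
Proof. by rewrite BfC Bf0r. Qed.

Lemma BfDr x y z : Bf x (y + z) = Bf x y + Bf x z.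
Proof. by have := Bf_linr x 1 y z; rewrite scale1r mul1r. Qed.
Lemma BfDl x y z : Bf (y + z) x = Bf y x + Bf z x.
Proof. by have := Bf_linl x 1 y z; rewrite scale1r mul1r. Qed.
Lemma BfZr x a y : Bf x (a *: y) = a * Bf x y.
Proof. by have := Bf_linr x a y 0; rewrite addr0 Bf0r addr0. Qed.
Lemma BfZl x a y : Bf (a *: y) x = a * Bf y x.
Proof. by rewrite BfC BfZr BfC. Qed.
Lemma BfNl x y : Bf (- y) x = - Bf y x.
Proof. by rewrite -scaleN1r BfZl mulN1r. Qed.
Lemma BfNr x y : Bf x (- y) = - Bf x y.
Proof. by rewrite BfC BfNl BfC. Qed.

Lemma Bf_sumr x m (c : 'I_m -> 'F_2) (v : 'I_m -> V n) :
  Bf x (\sum_(i < m) c i *: v i) = \sum_(i < m) c i * Bf x (v i).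
Proof.
elim: m c v => [|m IH] c v; first by rewrite !big_ord0 Bf0r.
by rewrite !big_ord_recr /= BfDr IH BfZr.
Qed.

Lemma QfD x y : Qf (x + y) = Qf x + Qf y + Bf x y.
Proof. rewrite /Bf; ring. Qed.

Lemma Qf0 : Qf (0 : V n) = 0.
Proof. by rewrite /Qf big1 // => i _; rewrite mxE mul0r. Qed.

Lemma F2_1 (c : 'F_2) : c != 0 -> c = 1.
Proof. by case: c => [[|[|//]] Hc] //= _; apply/val_inj. Qed.

Lemma F2_cases (c : 'F_2) : c = 0 \/ c = 1.
Proof. by case: (eqVneq c 0) => [->|/F2_1 ->]; [left|right]. Qed.

End Basics.

Section Nondeg.
Variable n : nat.
Implicit Types x y z : V n.

Lemma ev_eq (i j : 'I_n) : (ev j == ev i) = (j == i).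
Proof. by rewrite -val_eqE /= (inj_eq double_inj) val_eqE. Qed.
Lemma od_eq (i j : 'I_n) : (od j == od i) = (j == i).
Proof. by rewrite -val_eqE /= eqSS (inj_eq double_inj) val_eqE. Qed.
Lemma ev_od (i j : 'I_n) : (ev j == od i) = false.
Proof.
apply/negbTE/negP => /eqP /(congr1 (fun k : 'I_(n.*2) => odd k)) /=.
by rewrite odd_double /= odd_double.
Qed.

Lemma Bf_delta_od x (i : 'I_n) : Bf x (delta_mx 0 (od i)) = x 0 (ev i).
Proof.
rewrite BfE /Bsum (bigD1 i) //= big1 => [|j ji]; rewrite !mxE eqxx /=.
  by rewrite od_eq eqxx ev_od mulr1 mulr0 !addr0.
by rewrite od_eq (negbTE ji) ev_od !mulr0 addr0.
Qed.

Lemma Bf_delta_ev x (i : 'I_n) : Bf x (delta_mx 0 (ev i)) = x 0 (od i).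
Proof.
rewrite BfE /Bsum (bigD1 i) //= big1 => [|j ji]; rewrite !mxE eqxx /=.
  by rewrite ev_eq eqxx eq_sym ev_od mulr1 mulr0 !add0r addr0.
by rewrite ev_eq (negbTE ji) eq_sym ev_od !mulr0 addr0.
Qed.

Lemma Bf_nondeg x : (forall y, Bf x y = 0) -> x = 0.
Proof.
move=> H; apply/rowP => k; rewrite mxE.
have hk : (k./2 < n)%N by rewrite ltn_half_double.
have hk2 := odd_double_half k.
case: (boolP (odd k)) => ok.
  have -> : k = od (Ordinal hk) by apply: val_inj; rewrite /= -{1}hk2 ok add1n.
  by rewrite -Bf_delta_ev H.
have -> : k = ev (Ordinal hk) by apply: val_inj; rewrite /= -{1}hk2 (negbTE ok) add0n.
by rewrite -Bf_delta_od H.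
Qed.

End Nondeg.

Lemma memv_perp n (U : {vspace V n}) y :
  y \in perp U <-> (forall x, x \in U -> Bf x y = 0).
Proof.
rewrite /perp; set s := [seq _ <- _ | _]; split.
  move=> Hy x xU; rewrite (coord_span (X := in_tuple s) Hy) Bf_sumr big1 // => i _.
  have : s`_i \in s by apply: mem_nth; exact: (ltn_ord i).
  rewrite mem_filter => /andP [/forallP /(_ x) /implyP /(_ xU) /eqP -> _].
  by rewrite mulr0.
move=> H; apply: memv_span; rewrite mem_filter mem_enum in_setT andbT.
by apply/forallP => x; apply/implyP => xU; apply/eqP; apply: H.
Qed.

Lemma memv_perp_line n (x y : V n) : y \in perp <[x]>%VS <-> Bf x y = 0.
Proof.
rewrite memv_perp; split; first by apply; apply: memv_line.
by move=> H v /vlineP [c ->]; rewrite BfZl H mulr0.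
Qed.

Definition fB n (H : {vspace V n}) (v : V n) : 'rV['F_2]_(\dim H) :=
  \row_i Bf v (vbasis H)`_i.

Fact fB_lin n (H : {vspace V n}) : linear (fB H).
Proof. by move=> a u v; apply/rowP => i; rewrite !mxE Bf_linl. Qed.

HB.instance Definition _ n H := GRing.isLinear.Build 'F_2 (V n) 'rV['F_2]_(\dim H) *:%R (@fB n H) (fB_lin H).

Section Main.
Variables (n : nat) (Pi Sigma : {vspace V n}).
Hypotheses (n2 : (2 <= n)%N) (tsP : totally_singular Pi)
  (tsS : totally_singular Sigma) (dP : \dim Pi = n) (dS : \dim Sigma = n)
  (cap0 : (Pi :&: Sigma = 0)%VS).

Lemma sum_full : (Pi + Sigma)%VS = fullv.
Proof.
apply/eqP; rewrite eqEdim subvf /= dimvf dimv_disjoint_sum // dP dS.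
by rewrite /dim /= mul1n addnn.
Qed.

Lemma decomp v : exists p s, [/\ p \in Pi, s \in Sigma & v = p + s].
Proof.
have : v \in (Pi + Sigma)%VS by rewrite sum_full memvf.
by case/memv_addP => p pP [s sS ->]; exists p, s.
Qed.

Lemma BtsP p q : p \in Pi -> q \in Pi -> Bf p q = 0.
Proof. by move=> pP qP; rewrite /Bf !tsP ?memvD // !subr0. Qed.
Lemma BtsS p q : p \in Sigma -> q \in Sigma -> Bf p q = 0.
Proof. by move=> pP qP; rewrite /Bf !tsS ?memvD // !subr0. Qed.

Lemma ndP p : p \in Pi -> (forall s, s \in Sigma -> Bf p s = 0) -> p = 0.
Proof.
move=> pP H; apply: Bf_nondeg => v; have [q [s [qP sS ->]]] := decomp v.
by rewrite BfDr BtsP // H // addr0.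
Qed.

Lemma ndS s : s \in Sigma -> (forall p, p \in Pi -> Bf p s = 0) -> s = 0.
Proof.
move=> sS H; apply: Bf_nondeg => v; have [q [t [qP tS ->]]] := decomp v.
by rewrite BfDr BfC H // BtsS // addr0.
Qed.

Lemma QfPS p s : p \in Pi -> s \in Sigma -> Qf (p + s) = Bf p s.
Proof. by move=> pP sS; rewrite QfD tsP // tsS // !add0r. Qed.

Lemma fmap1 p s : p \in Pi -> s \in Sigma -> Bf p s = 1 ->
  (perp (perp <[p + s]> :&: Pi) :&: Sigma)%VS = <[s]>%VS.
Proof.
move=> pP sS ps1; apply/vspaceP => sg; rewrite memv_cap; apply/idP/idP.
  case/andP => /memv_perp Hg sgS.
  set c := Bf p sg.
  have : sg - c *: s = 0.
    apply: ndS; first by rewrite memvB // memvZ.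
    move=> q qP.
    have Hq : Bf (q - Bf s q *: p) sg = 0.
      apply: Hg; rewrite memv_cap; apply/andP; split; last by rewrite memvB // memvZ.
      apply/memv_perp_line.
      by rewrite BfDl !BfDr BtsP ?memvN // BfNr BfZr (BtsP pP pP) mulr0 oppr0 !add0r BfNr BfZr (BfC s p) ps1 mulr1 subrr.
    move: Hq; rewrite BfDl BfNl BfZl -/c => /eqP; rewrite subr_eq0 => /eqP Hq.
    by rewrite BfDr BfNr BfZr Hq BfC mulrC subrr.
  by move/eqP; rewrite subr_eq0 => /eqP ->; rewrite memvZ // memv_line.
case/vlineP => c ->; apply/andP; split; last by rewrite memvZ.
apply/memv_perp => g; rewrite memv_cap => /andP [/memv_perp_line Hg gP].
by rewrite BfZr BfC; move: Hg; rewrite BfDl BtsP // add0r => ->; rewrite mulr0.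
Qed.

Lemma fmap2 p s sg : p \in Pi -> s \in Sigma ->
  (sg \in (perp <[p + s]> :&: Sigma)%VS) = (sg \in Sigma) && (Bf p sg == 0).
Proof.
move=> pP sS; rewrite memv_cap andbC; case sgS: (sg \in Sigma) => //=.
apply/idP/idP.
  by move/memv_perp_line; rewrite BfDl (BtsS sS) // addr0 => ->.
by move/eqP => H; apply/memv_perp_line; rewrite BfDl (BtsS sS) // addr0.
Qed.

Lemma F2_neq0 (c : 'F_2) : c = 1 -> c != 0.
Proof. by move=> ->; rewrite oner_eq0. Qed.

Lemma Hspec p s (H : {vspace V n}) : s \in Sigma -> Bf p s = 1 ->
  (forall sg, (sg \in H) = (sg \in Sigma) && (Bf p sg == 0)) ->
  [/\ s != 0, s \notin H, (H + <[s]> = Sigma)%VS & \dim H = (n - 1)%N].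
Proof.
move=> sS ps1 HH.
have s0 : s != 0 by apply/eqP => e; move: ps1; rewrite e Bf0r => /esym/eqP; rewrite oner_eq0.
have sH : s \notin H by rewrite HH ps1 oner_eq0 andbF.
have HS : (H + <[s]> = Sigma)%VS.
  apply: subv_anti; apply/andP; split.
    rewrite subv_add -memvE sS andbT; apply/subvP => v.
    by rewrite HH => /andP [].
  apply/subvP => sg sgS; apply/memv_addP.
  exists (sg - Bf p sg *: s); last exists (Bf p sg *: s).
  - by rewrite HH memvB ?memvZ //= BfDr BfNr BfZr ps1 mulr1 subrr.
  - by rewrite memvZ // memv_line.
  - by rewrite subrK.
have cap : (H :&: <[s]> = 0)%VS.
  apply/eqP; rewrite -subv0; apply/subvP => v; rewrite memv_cap memv0.
  case/andP => vH /vlineP [c Hc]; move: vH; rewrite Hc.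
  by case: (F2_cases c) => ->; rewrite ?scale0r ?eqxx // scale1r (negbTE sH).
split => //; move: (dimv_disjoint_sum cap); rewrite HS dS dim_vline s0 => E.
apply/eqP; rewrite -(eqn_add2r 1) subnK; first by rewrite -E.
exact: leq_trans n2.
Qed.

Lemma ns_decomp X : nonsingular_point X ->
  exists p s, [/\ p \in Pi, s \in Sigma, Bf p s = 1 & X = <[p + s]>%VS].
Proof.
case=> dX [x [xX Qx]].
have x0 : x != 0 by apply: contraNneq Qx => ->; rewrite Qf0.
have : (<[x]> == X)%VS by rewrite eqEdim -memvE xX dim_vline x0 dX.
move/eqP => <-; have [p [s [pP sS xE]]] := decomp x.
exists p, s; split => //; last by rewrite xE.
by apply: F2_1; rewrite -QfPS // -xE.
Qed.

Lemma part1 X : nonsingular_point X -> antiflag Sigma (fmap Pi Sigma X).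
Proof.
move/ns_decomp => [p [s [pP sS ps1 ->]]].
rewrite /fmap /= /antiflag /= fmap1 //.
have [s0 sH HS dH] := Hspec (H := (perp <[p + s]> :&: Sigma)%VS) sS ps1
  (fun sg => fmap2 sg pP sS).
split.
- by rewrite -memvE.
- by rewrite dim_vline s0.
- exact: capvSr.
- exact: dH.
- by rewrite -memvE.
Qed.

Lemma part2 X Y : nonsingular_point X -> nonsingular_point Y ->
  fmap Pi Sigma X = fmap Pi Sigma Y -> X = Y.
Proof.
move/ns_decomp => [p [s [pP sS ps1 ->]]] /ns_decomp [p' [s' [pP' sS' ps1' ->]]].
rewrite /fmap /= !fmap1 // => E.
move: (congr1 fst E) (congr1 snd E) => /= E1 E2.
have [s'0 _ _ _] := Hspec (H := (perp <[p' + s']> :&: Sigma)%VS) sS' ps1'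
  (fun sg => fmap2 sg pP' sS').
have ss : s' = s.
  have := memv_line s'; rewrite -E1.
  case/vlineP => c e; case: (F2_cases c) => ce; move: e; rewrite ce.
    by rewrite scale0r => e; move: s'0; rewrite e eqxx.
  by rewrite scale1r.
subst s'.
have pp : p - p' = 0.
  apply: ndP; first by rewrite memvB.
  move=> sg sgS.
  have hH : sg - Bf p sg *: s \in (perp <[p + s]> :&: Sigma)%VS.
    by rewrite fmap2 // memvB ?memvZ //= BfDr BfNr BfZr ps1 mulr1 subrr.
  move: hH; rewrite E2 fmap2 // => /andP [_ /eqP].
  rewrite BfDr BfNr BfZr ps1' mulr1 => /eqP; rewrite subr_eq0 => /eqP e.
  by rewrite BfDl BfNl e subrr.
by move/eqP: pp; rewrite subr_eq0 => /eqP ->.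
Qed.

Lemma part3 PH : antiflag Sigma PH ->
  exists2 X, nonsingular_point X & fmap Pi Sigma X = PH.
Proof.
case: PH => P H; rewrite /antiflag /= => -[PS dP1 HS' dH nPH].
set s := vpick P.
have P0 : P != 0%VS by apply/eqP => e; move: dP1; rewrite e dimv0.
have s0 : s != 0 by rewrite vpick0.
have sP : <[s]>%VS = P.
  by apply/eqP; rewrite eqEdim -memvE memv_pick dim_vline s0 dP1.
have sS : s \in Sigma by rewrite memvE sP.
have sH : s \notin H by rewrite memvE sP.
have cap : (H :&: <[s]> = 0)%VS.
  apply/eqP; rewrite -subv0; apply/subvP => v; rewrite memv_cap memv0.
  case/andP => vH /vlineP [c Hc]; move: vH; rewrite Hc.
  by case: (F2_cases c) => ->; rewrite ?scale0r ?eqxx // scale1r (negbTE sH).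
have HSg : (H + <[s]> = Sigma)%VS.
  apply/eqP; rewrite eqEdim subv_add HS' -memvE sS /=.
  rewrite dimv_disjoint_sum // dH dim_vline s0 dS subn1 addn1 prednK //.
  exact: (leq_trans (isT : (1 <= 2)%N) n2).
have dec sg : sg \in Sigma -> exists h c, h \in H /\ sg = h + c *: s.
  by rewrite -HSg => /memv_addP [h hH [v /vlineP [c ->] ->]]; exists h, c.
set f := linfun (@fB n H).
have dimW : (0 < \dim (Pi :&: lker f))%N.
  have h1 := limg_ker_dim f Pi.
  have h2 : (\dim (f @: Pi) <= \dim H)%N.
    by rewrite (leq_trans (dimvS (subvf _))) // dimvf /dim /= mul1n.
  move: h1 h2; rewrite dP; move: (\dim (Pi :&: lker f)) (\dim (f @: Pi)) => a b.
  rewrite dH; lia.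
have W0 : (Pi :&: lker f != 0)%VS by rewrite -dimv_eq0 -lt0n.
set p := vpick (Pi :&: lker f).
have p0 : p != 0 by rewrite vpick0.
have := memv_pick (Pi :&: lker f); rewrite -/p memv_cap memv_ker.
case/andP => pP /eqP fp0.
have pH h : h \in H -> Bf p h = 0.
  move=> hH; rewrite (coord_vbasis hH) Bf_sumr big1 // => i _.
  have := congr1 (fun r : 'rV_(\dim H) => r 0 i) fp0.
  by rewrite lfunE /= /fB !mxE => ->; rewrite mulr0.
have ps1 : Bf p s = 1.
  apply: F2_1; apply/eqP => e; move/eqP: p0; apply; apply: ndP => //.
  move=> sg /dec [h [c [hH ->]]].
  by rewrite BfDr BfZr pH // e mulr0 addr0.
have ps0 : p + s != 0.
  apply/eqP => e; move: ps1; rewrite -QfPS // e Qf0 => /eqP.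
  by rewrite eq_sym oner_eq0.
exists <[p + s]>%VS.
  split; first by rewrite /is_point dim_vline ps0.
  by exists (p + s); rewrite memv_line QfPS // ps1 oner_eq0.
rewrite /fmap /= fmap1 // sP; congr pair; apply/vspaceP => sg; rewrite fmap2 //.
apply/andP/idP.
  case=> sgS /eqP e; move: (dec sg sgS) => [h [c [hH sgE]]].
  move: e; rewrite sgE BfDr BfZr pH // ps1 mulr1 add0r => ->.
  by rewrite scale0r addr0.
move=> hH; split; first exact: (subvP HS').
by apply/eqP; apply: pH.
Qed.

End Main.

Theorem mainTheorem2 (n : nat) (Pi Sigma : {vspace V n}) :
  (2 <= n)%N ->
  totally_singular Pi -> totally_singular Sigma ->
  \dim Pi = n -> \dim Sigma = n ->
  (Pi :&: Sigma = 0)%VS ->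
  [/\ (forall X, nonsingular_point X -> antiflag Sigma (fmap Pi Sigma X)),
      (forall X Y, nonsingular_point X -> nonsingular_point Y ->
         fmap Pi Sigma X = fmap Pi Sigma Y -> X = Y)
    & (forall PH, antiflag Sigma PH ->
         exists2 X, nonsingular_point X & fmap Pi Sigma X = PH)].
Proof.
move=> n2 tsP tsS dP dS cap0.
split=> [X|X Y|PH]; [exact: part1 | exact: part2 | exact: part3].
Qed.
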